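(* Let $\mathcal{A}\subset[\mathbb{N}]^{<\infty}$ be hereditary and compact, let $P\subset\mathbb{N}$ be infinite and $\alpha<\omega_1$. Then $\mathcal{A}$ is $\alpha$-large on $P$ if and only if $\mathrm{CB}(\mathcal{A}\cap[Q]^{<\infty})\ge\alpha+1$ for every infinite $Q\subset P$.
   Context: $[M]^{<\infty}$ = finite subsets of $M$, with the topology of pointwise convergence of characteristic functions. For hereditary compact $\mathcal{A}$: $\mathcal{A}^{(1)}=\{A\in\mathcal{A}:\exists N\subset\mathbb{N}\text{ infinite},\ \forall n\in N\ A\cup\{n\}\in\mathcal{A}\}$, $\mathcal{A}^{(0)}=\mathcal{A}$, $\mathcal{A}^{(\beta+1)}=(\mathcal{A}^{(\beta)})^{(1)}$, $\mathcal{A}^{(\alpha)}=\bigcap_{\beta<\alpha}\mathcal{A}^{(\beta)}$ for limit $\alpha$, and $\mathrm{CB}(\mathcal{A})=\min\{\alpha<\omega_1:\mathcal{A}^{(\alpha)}=\emptyset\}$. Transfinite family: given finite sets $A_n(\alpha)\subset[0,\alpha)$ for each countable limit $\alpha$, increasing in $n$ with $\max A_n(\alpha)\to\alpha$, set $\mathcal{F}_0=\{\emptyset\}$, $\mathcal{F}_{\beta+1}=\{\{n\}\cup E:n\in\mathbb{N},E\in\mathcal{F}_\beta\}\cup\{\emptyset\}$, and for limit $\alpha$, $\mathcal{F}_\alpha=\{\emptyset\}\cup\{E\ne\emptyset:E\in\bigcup_{\beta\in A_{\min E}(\alpha)}\mathcal{F}_\beta\}$. For $N=\{n_1<n_2<\dots\}$,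 $\mathcal{F}^N=\{\{n_i:i\in E\}:E\in\mathcal{F}\}$. $\mathcal{A}$ is $\alpha$-large on $P$ if every infinite $M\subset P$ contains an infinite $N$ with $\mathcal{F}_\alpha^N\subset\mathcal{A}$ (this is independent of the chosen transfinite family). *)

(* Defs.v *)
From HB Require Import structures.
From mathcomp Require Import all_boot all_order all_algebra finmap.
From mathcomp Require Import boolp classical_sets functions cardinality.
From mathcomp Require Import topology cantor.
From Stdlib Require Import List.

Set Implicit Arguments.
Unset Strict Implicit.
Unset Printing Implicit Defensive.

Local Open Scope classical_set_scope.

Definition nfamily := set {fset nat}.

Definition chi (E : {fset nat}) : cantor_space := fun n => n \in E.

(** compactness in the topology of pointwise convergence of characteristic
    functions, i.e. in the subspace topology of [N]^{<oo} inside 2^N *)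
Definition fam_compact (A : nfamily) : Prop := compact (chi @` A).

Definition hereditary (A : nfamily) : Prop :=
  forall E F : {fset nat}, A E -> (F `<=` E)%fset -> A F.

Definition restrict (A : nfamily) (Q : set nat) : nfamily :=
  fun E => A E /\ (forall n, n \in E -> Q n).

(** F^N : for N = {n_0 < n_1 < ...}, the nfamily {{n_i : i in E} : E in F};
    [e] is the increasing enumeration of N. *)
Definition spread (N : set nat) (F : nfamily) : nfamily :=
  fun E' => exists e : nat -> nat,
      (forall i j, (i < j)%N -> (e i < e j)%N) /\
      (forall m, N m <-> exists i, e i = m) /\
      exists E, F E /\ E' = [fset e i | i in E]%fset.

(** [lt] is a strict well-order on [O] in which every initial segment is
    countable and every countable subset has a strict upper bound; such an
    order is isomorphic to omega_1 (the set of countable ordinals). *)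
Record is_omega1 (O : Type) (lt : O -> O -> Prop) : Prop := {
  o1_irrefl : forall a, ~ lt a a;
  o1_trans : forall a b c, lt a b -> lt b c -> lt a c;
  o1_total : forall a b, lt a b \/ a = b \/ lt b a;
  o1_wf : well_founded lt;
  o1_countable_segments : forall a, countable [set b | lt b a];
  o1_unbounded : forall S : set O, countable S -> exists u, forall s, S s -> lt s u
}.

Section Ordinals.
Variables (O : Type) (lt : O -> O -> Prop).

Definition is_zero (a : O) : Prop := forall b, ~ lt b a.
(** a = b + 1 *)
Definition succ_of (b a : O) : Prop :=
  lt b a /\ forall c, lt b c -> lt c a -> False.
Definition is_limit (a : O) : Prop :=
  ~ is_zero a /\ forall b, lt b a -> exists c, lt b c /\ lt c a.

(** Cantor–Bendixson derivatives A^(a), by transfinite recursion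
    (least solution of the recursive clauses; unique since lt is well founded) *)
Inductive derived (A : nfamily) : O -> {fset nat} -> Prop :=
| derived_zero a E : is_zero a -> A E -> derived A a E
| derived_succ b a E : succ_of b a ->
    derived A b E ->
    (exists N : set nat, infinite_set N /\ forall n, N n -> derived A b (n |` E)%fset) ->
    derived A a E
| derived_limit a E : is_limit a -> (forall b, lt b a -> derived A b E) ->
    derived A a E.

Definition is_CB (A : nfamily) (g : O) : Prop :=
  (forall E, ~ derived A g E) /\
  (forall d, lt d g -> exists E, derived A d E).

(** CB(A) >= a + 1, i.e. CB(A) > a *)
Definition CB_ge_succ (A : nfamily) (a : O) : Prop :=
  exists g, is_CB A g /\ lt a g.

Definition is_tf_data (An : nat -> O -> list O) : Prop :=
  forall a, is_limit a ->
    (forall n b, In b (An n a) -> lt b a) /\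
    (forall n b, In b (An n a) -> In b (An n.+1 a)) /\
    (forall b, lt b a -> exists N, forall n, (N <= n)%N ->
         exists c, In c (An n a) /\ lt b c).

Inductive tfam (An : nat -> O -> list O) : O -> {fset nat} -> Prop :=
| tfam_zero a : is_zero a -> tfam An a fset0
| tfam_succ_empty b a : succ_of b a -> tfam An a fset0
| tfam_succ b a n E : succ_of b a -> tfam An b E -> tfam An a (n |` E)%fset
| tfam_limit_empty a : is_limit a -> tfam An a fset0
| tfam_limit a E b m : is_limit a -> E <> fset0 ->
    m \in E -> (forall x, x \in E -> (m <= x)%N) ->
    In b (An m a) -> tfam An b E -> tfam An a E.

Definition large (An : nat -> O -> list O) (A : nfamily) (a : O) (P : set nat) : Prop :=
  forall M : set nat, M `<=` P -> infinite_set M ->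
    exists N : set nat, N `<=` M /\ infinite_set N /\
      spread N (tfam An a) `<=` A.

End Ordinals.

(* Main.v *)
Require Import Defs.
From mathcomp Require Import all_boot finmap boolp classical_sets cardinality.
From HB Require Import structures.
From mathcomp Require Import all_order functions topology cantor.
Require Import Defs.
Set Implicit Arguments.
Unset Strict Implicit.
Unset Printing Implicit Defensive.
Local Open Scope classical_set_scope.
Local Open Scope fset_scope.

Lemma infinite_nat_ub (N : set nat) : infinite_set N -> forall n, exists m, N m /\ (n <= m)%N.
Proof.
move=> iN n; apply: contra_notP iN => H.
apply: (@sub_finite_set _ _ `I_n) => // m Nm /=.
by rewrite ltnNge; apply/negP => nm; apply: H; exists m.
Qed.

Lemma ub_infinite (N : set nat) : (forall n, exists m, N m /\ (n <= m)%N) -> infinite_set N.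
Proof.
move=> H /finite_fsetP [X eX].
have [m [Nm]] := H (\max_(x <- X) x).+1.
rewrite eX /= in Nm.
have := @leq_bigmax_seq _ (enum_fset X) xpredT id m.
rewrite /= in Nm. move=> /(_ Nm isT). rewrite ltnNge => ->. done.
Qed.

Lemma chi_nbhs (p : cantor_space) n : nbhs p [set q : cantor_space | q n = p n].
Proof.
have := @proj_continuous nat (fun _ => bool) n p.
move=> /(_ [set p n]) H.
have : nbhs (p n : bool) [set p n].
  by rewrite nbhs_principalE; apply/principal_filterP.
by move/H.
Qed.

Lemma no_chain (A : nfamily) (E : nat -> {fset nat}) :
  fam_compact A -> (forall k, A (E k)) ->
  (forall k l, (k <= l)%N -> E k `<=` E l) ->
  (forall G : {fset nat}, exists K n, n \in E K /\ n \notin G) -> False.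
Proof.
move=> cA AE mono grow.
set F := (fun k => chi (E k)) @ \oo.
have PF : ProperFilter F by apply: fmap_proper_filter.
have FA : F (chi @` A)%classic.
  have H : \oo (fun k => (chi @` A)%classic (chi (E k))) by apply: filterE => k; exists (E k).
  exact: H.
have [p [[G AG <-] clp]] := cA F PF FA.
have [K [n [nE nG]]] := grow G.
have FX : F ((fun k => chi (E k)) @` [set k | (K <= k)%N])%classic.
  by exists K => // k /= Kk; exists k.
have := clp _ _ FX (chi_nbhs (chi G) n).
case=> q [[k /= Kk <-]] /=.
rewrite /chi (negbTE nG).
by move/fsubsetP: (mono _ _ Kk) => /(_ n nE) ->.
Qed.


Definition sinc (e : nat -> nat) := forall i j, (i < j)%N -> (e i < e j)%N.

Lemma sinc_ge e : sinc e -> forall n, (n <= e n)%N.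
Proof.
move=> se; elim=> [|n IH] //; apply: leq_ltn_trans IH (se _ _ (ltnSn n)).
Qed.

Lemma sinc_le e i j : sinc e -> (i <= j)%N -> (e i <= e j)%N.
Proof. by move=> se; rewrite leq_eqVlt => /orP [/eqP ->|/se /ltnW]. Qed.

Lemma sinc_ltE e i j : sinc e -> (e i < e j)%N = (i < j)%N.
Proof.
move=> se; apply/idP/idP; last exact: se.
by apply: contraLR; rewrite -!leqNgt => /(sinc_le se).
Qed.

Lemma sinc_leE e i j : sinc e -> (e i <= e j)%N = (i <= j)%N.
Proof. by move=> se; rewrite leqNgt (sinc_ltE _ _ se) -leqNgt. Qed.

Lemma sinc_inj e : sinc e -> injective e.
Proof. by move=> se i j eij; apply/eqP; rewrite eqn_leq -(sinc_leE i j se) -(sinc_leE j i se) eij leqnn. Qed.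

Lemma sinc_range_inf e : sinc e -> infinite_set (range e).
Proof.
move=> se; apply: ub_infinite => n; exists (e n); split; first by exists n.
exact: sinc_ge.
Qed.


Lemma refine_fact e e' : sinc e -> sinc e' -> (forall i, exists j, e j = e' i) ->
  exists g, sinc g /\ forall i, e' i = e (g i).
Proof.
move=> se se' H; have [g Hg] := choice H.
exists g; split; last by move=> i; rewrite Hg.
by move=> i j ij; rewrite -(sinc_ltE _ _ se) !Hg; apply: se'.
Qed.

Lemma enum_inf (N : set nat) : infinite_set N ->
  exists e, sinc e /\ forall m, N m <-> exists i, e i = m.
Proof.
move=> iN.
have H : forall n, exists m, [/\ N m, (n <= m)%N & forall x, N x -> (n <= x)%N -> (m <= x)%N].
  move=> n; have [m0 [Nm0 nm0]] := infinite_nat_ub iN n.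
  have ex : exists x, `[< N x >] && (n <= x)%N by exists m0; rewrite nm0 andbT; apply/asboolP.
  case: (ex_minnP ex) => m /andP [/asboolP Nm nm] mmin; exists m; split => // x Nx nx.
  by apply: mmin; rewrite nx andbT; apply/asboolP.
have [c Hc] := choice H.
pose tau := fix tau t := match t with 0 => c 0 | t'.+1 => c (tau t').+1 end.
have tauS : forall t, tau t.+1 = c (tau t).+1 by [].
have st : sinc tau.
  have s1 : forall t, (tau t < tau t.+1)%N by move=> t; rewrite tauS; case: (Hc (tau t).+1).
  move=> i j; elim: j => [//|j IH]; rewrite ltnS leq_eqVlt => /orP [/eqP ->|/IH ij] //.
  exact: ltn_trans ij (s1 j).
exists tau; split => // m; split; last first.
  by move=> [[|i] <-]; [case: (Hc 0)|rewrite tauS; case: (Hc (tau i).+1)].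
have cov : forall t x, N x -> (x < tau t)%N -> exists i, tau i = x.
  elim=> [|t IH] x Nx.
    by case: (Hc 0) => _ _ /(_ x Nx (leq0n x)); rewrite leqNgt => /negbTE ->.
  rewrite tauS; case: (ltngtP x (tau t)) => [xt _|xt|->]; last by exists t.
    exact: IH xt.
  by case: (Hc (tau t).+1) => _ _ /(_ x Nx xt); rewrite leqNgt => /negbTE ->.
move=> Nm; apply: (cov m.+1 m Nm); exact: sinc_ge st m.+1.
Qed.

Lemma sinc_in (S : set nat) (k : nat) : (forall n, exists m, S m /\ (n <= m)%N) ->
  exists s, sinc s /\ (forall i, (i < k)%N -> s i = i) /\ forall i, (k <= i)%N -> S (s i) /\ (k <= s i)%N.
Proof.
move=> H.
have H' : forall n, exists m, S m /\ (n <= m)%N by [].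
have [c Hc] := choice H'.
pose tau := fix tau t := match t with 0 => c k | t'.+1 => c (tau t').+1 end.
have tauS : forall t, tau t.+1 = c (tau t).+1 by [].
have tk : forall t, S (tau t) /\ (k <= tau t)%N.
  elim=> [|t [_ IH]]; first exact: Hc.
  rewrite tauS; have [Sc cc] := Hc (tau t).+1; split => //.
  exact: leq_trans (leqW IH) cc.
have st : sinc tau.
  have s1 : forall t, (tau t < tau t.+1)%N by move=> t; rewrite tauS; case: (Hc (tau t).+1).
  move=> i j; elim: j => [//|j IH]; rewrite ltnS leq_eqVlt => /orP [/eqP ->|/IH ij] //.
  exact: ltn_trans ij (s1 j).
exists (fun i => if (i < k)%N then i else tau (i - k)); split; last split.
- move=> i j ij; have [ik|ki] := ltnP i k; have [jk|kj] := ltnP j k.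
  + exact: ij.
  + exact: leq_trans ik (tk _).2.
  + by move: (leq_ltn_trans ki (ltn_trans ij jk)); rewrite ltnn.
  + by apply: st; apply: ltn_sub2r => //; exact: leq_ltn_trans ki ij.
- by move=> i ik; rewrite ik.
- by move=> i; rewrite ltnNge => ->; apply: tk.
Qed.


Definition tail (e : nat -> nat) (k : nat) : set nat :=
  [set x | exists2 i, (k <= i)%N & e i = x]%classic.

Definition subr (e e' : nat -> nat) := forall i, exists j, e j = e' i.

Lemma subr_trans e1 e2 e3 : subr e1 e2 -> subr e2 e3 -> subr e1 e3.
Proof. by move=> h12 h23 i; have [j <-] := h23 i; have [l <-] := h12 j; exists l. Qed.

Lemma subr_refl e : subr e e.
Proof. by move=> i; exists i. Qed.

Lemma diag (k : nat) (Phi : nat -> (nat -> nat) -> Prop) :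
  (forall j e e', sinc e -> sinc e' -> subr e e' ->
     (forall i, (i <= j)%N -> e' i = e i) -> Phi j e -> Phi j e') ->
  (forall j e, sinc e -> exists e', [/\ sinc e', subr e e',
     (forall i, (i < j)%N -> e' i = e i) & Phi j e']) ->
  forall e, sinc e -> exists e', [/\ sinc e', subr e e',
     (forall i, (i < k)%N -> e' i = e i) & forall j, (k <= j)%N -> Phi j e'].
Proof.
move=> Hpers Hstep e se.
have st : forall j (x : {e | sinc e}), {e' | [/\ sinc e', subr (sval x) e',
     (forall i, (i < j)%N -> e' i = sval x i) & Phi j e']}.
  by move=> j [e0 se0]; apply: cid; exact: Hstep j e0 se0.
pose f := fix f n : {e | sinc e} := match n with
  | 0 => exist _ e se
  | n'.+1 => let y := st (k + n')%N (f n') in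
             exist _ (sval y) (let: And4 h _ _ _ := svalP y in h) end.
pose E n := sval (f n).
have F1 : forall n, sinc (E n) by move=> n; exact: svalP (f n).
have F2 : forall n, subr (E n) (E n.+1).
  by move=> n; rewrite /E /=; case: (svalP (st (k + n)%N (f n))).
have F3 : forall n i, (i < k + n)%N -> E n.+1 i = E n i.
  by move=> n; rewrite /E /=; case: (svalP (st (k + n)%N (f n))).
have F4 : forall n, Phi (k + n)%N (E n.+1).
  by move=> n; rewrite /E /=; case: (svalP (st (k + n)%N (f n))).
have D1 : forall n m, (n <= m)%N -> forall i, (i < k + n)%N -> E m i = E n i.
  move=> n m nm; rewrite -(subnK nm); elim: (m - n) => [|d IH] i ik //.
  rewrite addSn F3 ?IH //; apply: leq_trans ik _; rewrite leq_add2l leq_addl //.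
have D2 : forall n m, (n <= m)%N -> subr (E n) (E m).
  move=> n m nm; rewrite -(subnK nm); elim: (m - n) => [|d IH]; first exact: subr_refl.
  by rewrite addSn; apply: subr_trans IH (F2 _).
pose einf i := E i.+1 i.
have Einf : forall m i, (i < m)%N -> E m i = einf i.
  move=> m i im; rewrite /einf; apply: D1 => //; apply: leq_trans (ltnSn i) _.
  by rewrite addnS ltnS leq_addl.
have seinf : sinc einf.
  move=> i j ij; rewrite -(Einf j.+1 i) ?(ltn_trans ij) // -(Einf j.+1 j) //.
  exact: F1.
exists einf; split => //.
- move=> i; rewrite -(Einf i.+1 i) //; exact: D2 0 i.+1 isT i.
- by move=> i ik; rewrite -(Einf i.+1 i) // (D1 0) // addn0.
- move=> j kj; rewrite -(subnKC kj).
  apply: (Hpers _ (E (j - k).+1)) (F4 (j - k)) => //.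
  + move=> i; rewrite -(Einf (maxn i.+1 (j - k).+1) i); last by rewrite leq_maxl.
    apply: D2; exact: leq_maxr.
  + move=> i ij; rewrite -(Einf (maxn i.+1 (j - k).+1) i); last by rewrite leq_maxl.
    apply: D1; first exact: leq_maxr.
    by rewrite addnS ltnS.
Qed.

Section Ord.
Variables (O : Type) (lt : O -> O -> Prop) (HO : is_omega1 lt).

Lemma classify a : is_zero lt a \/ (exists b, succ_of lt b a) \/ is_limit lt a.
Proof.
have [z|nz] := pselect (is_zero lt a); first by left.
right; have [l|nl] := pselect (is_limit lt a); first by right.
left; apply: contra_notP nl => H; split => // b ba.
apply: contra_notP H => H; exists b; split => // c bc ca; apply: H; by exists c.
Qed.

Lemma succ_lt b a : succ_of lt b a -> lt b a.
Proof. by case. Qed.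

Lemma succ_not_limit b a : succ_of lt b a -> is_limit lt a -> False.
Proof. by move=> [ba H] [_ /(_ b ba) [c [bc ca]]]; exact: H bc ca. Qed.

Lemma succ_not_zero b a : succ_of lt b a -> is_zero lt a -> False.
Proof. by move=> [ba _] /(_ b). Qed.

Lemma succ_unique b b' a : succ_of lt b a -> succ_of lt b' a -> b = b'.
Proof.
move=> [ba Hb] [b'a Hb']; have [bb'|[//|b'b]] := o1_total HO b b'.
- by case: (Hb _ bb' b'a).
- by case: (Hb' _ b'b ba).
Qed.

Lemma succ_cases b a c : succ_of lt b a -> lt c a -> c = b \/ lt c b.
Proof.
move=> [ba Hb] ca; have [cb|[cb|bc]] := o1_total HO c b; [by right|by left|].
by case: (Hb _ bc ca).
Qed.

Lemma limit_ex a : is_limit lt a -> exists b, lt b a.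
Proof. by move=> [nz _]; apply: contra_notP nz => H b ba; apply: H; exists b. Qed.

Lemma wf_min (P : O -> Prop) : (exists x, P x) -> exists x, P x /\ forall y, P y -> ~ lt y x.
Proof.
move=> [x Px]; apply: contrapT => H.
suff : forall z, ~ P z by move/(_ x).
move=> z; elim/(well_founded_ind (o1_wf HO)): z => z IH Pz.
apply: H; exists z; split => // y Py yz; exact: IH yz Py.
Qed.

Lemma exists_succ b : exists a, succ_of lt b a.
Proof.
have [u Hu] := o1_unbounded HO (countable1 b).
have [a [ba amin]] := @wf_min (fun x => lt b x) (ex_intro _ u (Hu b erefl)).
by exists a; split => // c bc ca; exact: amin c bc ca.
Qed.

Lemma derived_inv B a E : derived lt B a E ->
  (is_zero lt a /\ B E) \/
  (exists b, succ_of lt b a /\ derived lt B b E /\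
     exists N : set nat, infinite_set N /\ forall n, N n -> derived lt B b (n |` E)) \/
  (is_limit lt a /\ forall b, lt b a -> derived lt B b E).
Proof.
case=> [a' E' z BE|b a' E' s d H|a' E' l H]; first by left.
- by right; left; exists b.
- by right; right.
Qed.

Lemma derived_rel (B C : nfamily) (R : {fset nat} -> {fset nat} -> Prop) (K : nat) :
  (forall T S, R T S -> B T -> C S) ->
  (forall T S n, (K <= n)%N -> R T S -> R (n |` T) (n |` S)) ->
  forall a T S, R T S -> derived lt B a T -> derived lt C a S.
Proof.
move=> HBC HR a; elim/(well_founded_ind (o1_wf HO)): a => a IH T S RTS.
move=> /derived_inv [[z BT]|[[b [sba [dbT [N [iN HN]]]]]|[la H]]].
- by apply: derived_zero => //; exact: HBC BT.
- apply: (derived_succ sba); first exact: IH (succ_lt sba) _ _ RTS dbT.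
  exists (N `&` [set n | (K <= n)%N])%classic; split.
    apply: ub_infinite => m.
    have [n [Nn mn]] := infinite_nat_ub iN (maxn m K).
    exists n; split; first by split => //=; apply: leq_trans mn; rewrite leq_maxr.
    by apply: leq_trans mn; rewrite leq_maxl.
  move=> n [Nn Kn]; apply: IH (succ_lt sba) _ _ (HR _ _ _ Kn RTS) (HN n Nn).
- by apply: derived_limit => // b ba; exact: IH ba _ _ RTS (H b ba).
Qed.

Lemma derived_in B a E : derived lt B a E -> B E.
Proof.
elim/(well_founded_ind (o1_wf HO)): a E => a IH E.
move=> /derived_inv [[z BT]|[[b [sba [dbT _]]]|[la H]]] //.
- exact: IH (succ_lt sba) _ dbT.
- by have [b ba] := limit_ex la; exact: IH ba _ (H b ba).
Qed.

Lemma derived_decr B a b E : derived lt B a E -> lt b a -> derived lt B b E.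
Proof.
elim/(well_founded_ind (o1_wf HO)): a E => a IH E.
move=> /derived_inv [[z BT]|[[c [sca [dcE _]]]|[la H]]] ba.
- by case: (z b ba).
- by have [->|bc] := succ_cases sca ba; [|exact: IH (succ_lt sca) _ dcE bc].
- exact: H.
Qed.

Lemma derived_mono B C a E : (forall G, B G -> C G) -> derived lt B a E -> derived lt C a E.
Proof.
move=> BC; apply: (@derived_rel B C (fun T S => T = S) 0 _ _ a E E erefl).
- by move=> T S ->; exact: BC.
- by move=> T S n _ ->.
Qed.

Lemma derived_her B a E F : hereditary B -> derived lt B a E -> F `<=` E -> derived lt B a F.
Proof.
move=> hB dE FE; apply: (@derived_rel B B (fun T S => S `<=` T) 0 _ _ a E F FE dE).
- by move=> T S ST BT; exact: hB BT ST.
- by move=> T S n _ ST; apply: fsetUS.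
Qed.

Lemma derived_trans B a x S : derived lt B a (x |` S) -> derived lt (fun G => B (x |` G)) a S.
Proof.
apply: (@derived_rel B _ (fun T S => T = x |` S) 0 _ _ a (x |` S) S erefl).
- by move=> T S' ->.
- by move=> T S' n _ ->; rewrite fsetUCA.
Qed.

Lemma derived_cofin B a S K : derived lt B a S -> (forall y, y \in S -> (K <= y)%N) ->
  derived lt (restrict B [set y | (K <= y)%N]%classic) a S.
Proof.
move=> dS HS.
apply: (@derived_rel B _ (fun T S' => T = S' /\ forall y, y \in S' -> (K <= y)%N) K _ _ a S S (conj erefl HS) dS).
- by move=> T S' [-> H] BS; split.
- move=> T S' n Kn [-> H]; split => // y; rewrite !inE => /orP [/eqP ->|]; [done|exact: H].
Qed.

Variables (An : nat -> O -> list O) (HAn : is_tf_data lt An).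

Lemma fset_min (E : {fset nat}) : E != fset0 -> exists m, m \in E /\ forall x, x \in E -> (m <= x)%N.
Proof.
move=> /fset0Pn [x xE].
case: (ex_minnP (ex_intro (fun n => n \in E) x xE)) => m mE mmin.
by exists m.
Qed.

Lemma An_mono a m n b : is_limit lt a -> (m <= n)%N -> List.In b (An m a) -> List.In b (An n a).
Proof.
move=> la; elim: n => [|n IH]; first by rewrite leqn0 => /eqP ->.
rewrite leq_eqVlt => /orP [/eqP -> //|]; rewrite ltnS => mn Hm.
exact: ((HAn la).2.1 n b (IH mn Hm)).
Qed.

Lemma tfam_empty a : tfam lt An a fset0.
Proof.
have [z|[[b s]|l]] := classify a.
- exact: tfam_zero.
- exact: (tfam_succ_empty An s).
- exact: tfam_limit_empty.
Qed.

Lemma tfam_spread a E (f : nat -> nat) : tfam lt An a E ->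
  {in E &, forall x y, (x < y)%N -> (f x < f y)%N} -> {in E, forall x, (x <= f x)%N} ->
  tfam lt An a (f @` E).
Proof.
move=> tE; elim: tE f => {a E}.
- by move=> a z f _ _; rewrite imfset0; apply: tfam_zero.
- by move=> b a s f _ _; rewrite imfset0; apply: (tfam_succ_empty An s).
- move=> b a n E s tE IH f Hi Hg; rewrite imfsetU1; apply: (tfam_succ _ s); apply: IH.
  + by move=> x y xE yE; apply: Hi; rewrite inE ?xE ?yE orbT.
  + by move=> x xE; apply: Hg; rewrite inE xE orbT.
- by move=> a l f _ _; rewrite imfset0; apply: tfam_limit_empty.
- move=> a E b m la nE mE mmin inb tE IH f Hi Hg.
  apply: (@tfam_limit _ _ _ _ _ b (f m) la).
  + by move/eqP; apply/negP/fset0Pn; exists (f m); apply: in_imfset.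
  + exact: in_imfset.
  + move=> y /imfsetP [x /= xE ->]; have := mmin x xE.
    rewrite leq_eqVlt => /orP [/eqP -> //|mx]; exact: ltnW (Hi m x mE xE mx).
  + exact: An_mono la (Hg m mE) inb.
  + exact: IH.
Qed.

Lemma tfam_succ_up b a E : succ_of lt b a -> tfam lt An b E -> tfam lt An a E.
Proof.
move=> s tE; have [->|nE] := eqVneq E fset0; first exact: tfam_empty.
have [x [xE _]] := fset_min nE.
have -> : E = x |` E by apply/esym/fsetUidPr; rewrite fsub1set.
exact: (tfam_succ _ s).
Qed.


Lemma tfam_her a E F : tfam lt An a E -> F `<=` E -> tfam lt An a F.
Proof.
move=> tE; elim: tE F => {a E}.
- by move=> a z F; rewrite fsubset0 => /eqP ->; apply: tfam_empty.
- by move=> b a s F; rewrite fsubset0 => /eqP ->; apply: tfam_empty.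
- move=> b a n E s tE IH F /fsubsetP FE.
  have [nF|nF] := boolP (n \in F).
    rewrite -(fsetD1K nF); apply: (tfam_succ _ s); apply: IH.
    apply/fsubsetP => z; rewrite in_fsetD1 => /andP [zn /FE].
    by rewrite !inE => /orP [/eqP zn'|//]; rewrite zn' eqxx in zn.
  apply: (@tfam_succ_up b a F s); apply: IH; apply/fsubsetP => z zF.
  have := FE z zF; rewrite !inE => /orP [zn|//].
  by move: nF; rewrite -(eqP zn) zF.
- by move=> a l F; rewrite fsubset0 => /eqP ->; apply: tfam_empty.
- move=> a E b m la nE mE mmin inb tE IH F /fsubsetP FE.
  have [->|nF] := eqVneq F fset0; first exact: tfam_empty.
  have [m' [m'F m'min]] := fset_min nF.
  apply: (@tfam_limit _ _ _ _ _ b m' la) => //.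
  + by move=> eF; move: nF; rewrite eF eqxx.
  + exact: An_mono la (mmin m' (FE m' m'F)) inb.
  + by apply: IH; apply/fsubsetP.
Qed.

Lemma tfam_exch a E x y : tfam lt An a E -> x \in E -> y \notin E -> (x < y)%N ->
  tfam lt An a (y |` (E `\ x)).
Proof.
move=> tE; elim: tE x y => {a E}.
- by move=> a z x y; rewrite inE.
- by move=> b a s x y; rewrite inE.
- move=> b a n E s tE IH x y xE yE xy.
  have yn : y != n by apply: contraNneq yE => ->; rewrite fset1U1.
  have yE' : y \notin E by apply: contraNN yE; apply: fset1Ur.
  have [xn|xn] := eqVneq x n.
    subst x; have [nE|nE] := boolP (n \in E).
      apply: (tfam_succ_up s).
      have -> : (n |` E) `\ n = E `\ n.
        by apply/fsetP => z; rewrite !inE; case: (z =P n).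
      exact: IH nE yE' xy.
    by rewrite fsetU1K //; apply: (tfam_succ _ s).
  have xE' : x \in E by move: xE; rewrite !inE (negbTE xn).
  have -> : y |` ((n |` E) `\ x) = n |` (y |` (E `\ x)).
    apply/fsetP => z; rewrite !inE.
    case Ey: (z == y); case En: (z == n); case Ex: (z == x); case: (z \in E) => //=.
    all: try by move/eqP: En => En; move/eqP: Ex => Ex; subst; rewrite eqxx in xn.
  by apply: (tfam_succ _ s); apply: IH.
- by move=> a l x y; rewrite inE.
- move=> a E b m la nE mE mmin inb tE IH x y xE yE xy.
  have nG : y |` (E `\ x) != fset0 by apply/fset0Pn; exists y; rewrite fset1U1.
  have [m' [m'G m'min]] := fset_min nG.
  apply: (@tfam_limit _ _ _ _ _ b m' la) => //.
  + by move=> eF; move: nG; rewrite eF eqxx.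
  + apply: An_mono la _ inb; move: m'G; rewrite !inE => /orP [/eqP ->|/andP [_ /mmin //]].
    exact: leq_trans (mmin x xE) (ltnW xy).
  + exact: IH.
Qed.

Lemma tfam_inv_succ b a E : tfam lt An a E -> succ_of lt b a ->
  E = fset0 \/ exists n E', tfam lt An b E' /\ E = n |` E'.
Proof.
case=> [a' z|b' a' s'|b' a' n E' s' tE'|a' l|a' E' b' m la nE mE mmin inb tE'] s.
- by case: (succ_not_zero s z).
- by left.
- by right; exists n, E'; rewrite (succ_unique s s').
- by left.
- by case: (succ_not_limit s la).
Qed.

Lemma tfam_inv_limit a E : tfam lt An a E -> is_limit lt a ->
  E = fset0 \/ exists bb m, m \in E /\ (forall x, x \in E -> (m <= x)%N) /\
     List.In bb (An m a) /\ tfam lt An bb E.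
Proof.
case=> [a' z|b' a' s'|b' a' n E' s' tE'|a' l|a' E' b' m la nE mE mmin inb tE'] l'.
- by case: l' => /(_ z).
- by case: (succ_not_limit s' l').
- by case: (succ_not_limit s' l').
- by left.
- by right; exists b', m.
Qed.

Lemma tfam_min b a E m : tfam lt An a E -> succ_of lt b a -> m \in E ->
  (forall z, z \in E -> (m <= z)%N) -> tfam lt An b (E `\ m).
Proof.
move=> tE s mE mmin; case: (tfam_inv_succ tE s) => [eE|[n [E' [tE' eE]]]].
  by move: mE; rewrite eE inE.
subst E; have [nE|nE] := boolP (n \in E').
  apply: (tfam_her tE'); apply/fsubsetP => z; rewrite !inE => /andP [_ /orP [/eqP ->|//]].
  exact: nE.
have [mn|mn] := eqVneq m n; first by rewrite mn fsetU1K.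
have mE' : m \in E' by move: mE; rewrite !inE (negbTE mn).
have mn' : (m < n)%N by rewrite ltn_neqAle mn mmin // fset1U1.
have -> : (n |` E') `\ m = n |` (E' `\ m).
  apply/fsetP => z; rewrite !inE; case: (z =P n) => [->|_] //=.
  by rewrite eq_sym mn.
exact: tfam_exch tE' mE' nE mn'.
Qed.


Lemma count_range (T : countType) (h : T -> O) : countable (range h).
Proof. exact: card_le_trans (card_image_le h setT) (countableP _). Qed.

Lemma derived_succ_inv B b a E : derived lt B a E -> succ_of lt b a ->
  exists N : set nat, infinite_set N /\ forall n, N n -> derived lt B b (n |` E).
Proof.
move=> /derived_inv [[z _]|[[b' [s' [_ H]]]|[l _]]] s.
- by case: (succ_not_zero s z).
- by rewrite (succ_unique s s').
- by case: (succ_not_limit s l).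
Qed.

Lemma CB_exists (B A : nfamily) : fam_compact A -> (forall E, B E -> A E) ->
  exists g, is_CB lt B g.
Proof.
move=> cA BA.
have [[g0 Hg0]|Hall] := pselect (exists g, forall E, ~ derived lt B g E).
  have [g [Hg gmin]] := @wf_min (fun g => forall E, ~ derived lt B g E) (ex_intro _ g0 Hg0).
  exists g; split => // d dg; apply: contrapT => H; apply: (gmin d) dg => E dE.
  by apply: H; exists E.
have Hall' : forall g, exists E, derived lt B g E.
  move=> g; apply: contrapT => H; apply: Hall; exists g => E dE; apply: H; by exists E.
exfalso.
set T := fun E => forall g, derived lt B g E.
have [u0 _] := o1_unbounded HO (countable0 O).
have T0 : exists E, T E.
  apply: contrapT => H.
  have H' : forall E, exists g, ~ derived lt B g E.
    move=> E; apply: contrapT => H1; apply: H; exists E => g; apply: contrapT => nd; apply: H1; by exists g.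
  have [h Hh] := choice H'.
  have [u Hu] := o1_unbounded HO (count_range h).
  have [E dE] := Hall' u.
  by apply: (Hh E); apply: derived_decr dE (Hu _ (ex_intro2 _ _ E I erefl)).
have Tstep : forall E, T E -> exists n, n \notin E /\ T (n |` E).
  move=> E TE; apply: contrapT => H2.
  have H' : forall n, exists g, n \notin E -> ~ derived lt B g (n |` E).
    move=> n; have [nE|nE] := boolP (n \in E); first by exists u0.
    apply: contrapT => H1; apply: H2; exists n; split => // g; apply: contrapT => nd.
    by apply: H1; exists g.
  have [h Hh] := choice H'.
  have [u Hu] := o1_unbounded HO (count_range h).
  have [u' su'] := exists_succ u.
  have [N [iN HN]] := derived_succ_inv (TE u') su'.
  have [n [Nn nE]] : (N `\` [set` E])%classic !=set0.
    by apply: infinite_setN0; apply: infinite_setD => //; exact: finite_fset.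
  apply: (Hh n); first by apply/negP.
  by apply: derived_decr (HN n Nn) (Hu _ (ex_intro2 _ _ n I erefl)).
have H' : forall E, exists n, T E -> n \notin E /\ T (n |` E).
  move=> E; have [TE|nTE] := pselect (T E); last by exists 0.
  by have [n Hn] := Tstep E TE; exists n.
have [nx Hnx] := choice H'.
have [E0 TE0] := T0.
set C := fun k => iter k (fun E => nx E |` E) E0.
have TC : forall k, T (C k).
  by elim=> [|k IH] //=; exact: (Hnx _ IH).2.
have Csz : forall k, (k <= #|` C k|)%N.
  elim=> [|k IH] //=; rewrite cardfsU1 (Hnx _ (TC k)).1 /=; exact: IH.
apply: (@no_chain A C cA).
- by move=> k; apply: BA; apply: (@derived_in _ u0); exact: TC.
- move=> k l kl; rewrite -(subnK kl); elim: (l - k) => [|d IH] //=.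
  by apply: fsubset_trans IH (fsubsetUr _ _).
- move=> G; exists (#|` G|).+1; apply: contrapT => H.
  have : C (#|` G|).+1 `<=` G.
    apply/fsubsetP => n nC; apply: contrapT => /negP nG; apply: H; by exists n.
  by move/fsubset_leq_card; rewrite leqNgt; move: (Csz (#|` G|).+1) => ->.
Qed.


Lemma lower_bound b : forall e S (H : nfamily), sinc e -> hereditary H ->
  (forall E, tfam lt An b E -> H (S `|` e @` E)) -> derived lt H b S.
Proof.
elim/(well_founded_ind (o1_wf HO)): b => a IH e S H se hH HE.
have [z|[[b s]|l]] := classify a.
- apply: derived_zero => //; have := HE _ (tfam_zero An z).
  by rewrite imfset0 fsetU0.
- apply: (derived_succ s).
    apply: (IH _ (succ_lt s) e S H se hH) => E tE.
    apply: (hH _ _ (HE _ (tfam_succ 0 s tE))).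
    by rewrite imfsetU1 fsetUS // fsubsetUr.
  exists (range e); split; first exact: sinc_range_inf.
  move=> _ [i _ <-]; apply: (IH _ (succ_lt s) e _ H se hH) => E tE.
  have := HE _ (tfam_succ i s tE); rewrite imfsetU1.
  by rewrite fsetUCA fsetUA.
- apply: (derived_limit l) => c ca.
  have [N0 HN0] := (HAn l).2.2 c ca.
  have [d [ind cd]] := HN0 N0 (leqnn N0).
  have da := (HAn l).1 N0 d ind.
  suff dd : derived lt H d S by exact: derived_decr dd cd.
  have se' : sinc (fun i => e (i + N0)%N) by move=> i j ij; apply: se; rewrite ltn_add2r.
  apply: (IH d da _ S H se' hH) => E tE.
  have -> : [fset e (i + N0)%N | i in E] = e @` ((fun i => (i + N0)%N) @` E).
    by rewrite -imfset_comp.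
  apply: HE.
  have [->|nE] := eqVneq E fset0; first by rewrite imfset0; apply: tfam_empty.
  have [m [mE mmin]] := fset_min nE.
  apply: (@tfam_limit _ _ _ _ _ d (m + N0)%N l).
  + by move/eqP; apply/negP/fset0Pn; exists (m + N0)%N; apply: in_imfset.
  + exact: in_imfset.
  + by move=> y /imfsetP [x /= xE ->]; rewrite leq_add2r mmin.
  + by apply: An_mono l _ ind; rewrite leq_addl.
  + apply: tfam_spread tE _ _.
    * by move=> x y _ _ xy; rewrite ltn_add2r.
    * by move=> x _; rewrite leq_addr.
Qed.


Definition GOOD (A : nfamily) k e b :=
  forall E, tfam lt An b E -> (forall i, i \in E -> (k <= i)%N) -> A (e @` E).
Definition BAD (A : nfamily) k e b := ~ derived lt (restrict A (tail e k)) b fset0.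
Definition Dprop b := forall A, hereditary A -> forall k e, sinc e ->
  exists e', [/\ sinc e', subr e e', (forall i, (i < k)%N -> e' i = e i) &
                 GOOD A k e' b \/ BAD A k e' b].

Lemma good_pers A k e e' b : sinc e -> sinc e' -> subr e e' -> GOOD A k e b -> GOOD A k e' b.
Proof.
move=> se se' sub G; have [g [sg Hg]] := refine_fact se se' sub.
move=> E tE Ek.
have -> : e' @` E = e @` (g @` E).
  by rewrite -imfset_comp; apply: eq_imfset => // i; exact: Hg.
apply: G.
- apply: tfam_spread tE _ _; [by move=> x y _ _; apply: sg | by move=> x _; apply: sinc_ge].
- move=> y /imfsetP [x /= xE ->]; exact: leq_trans (Ek x xE) (sinc_ge sg x).
Qed.

Lemma tail_sub e e' k : sinc e -> sinc e' -> subr e e' -> (tail e' k `<=` tail e k)%classic.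
Proof.
move=> se se' sub x [i ki <-]; have [g [sg Hg]] := refine_fact se se' sub.
by exists (g i); [exact: leq_trans ki (sinc_ge sg i)|rewrite Hg].
Qed.

Lemma bad_pers A k e e' b : sinc e -> sinc e' -> subr e e' -> BAD A k e b -> BAD A k e' b.
Proof.
move=> se se' sub Bd d; apply: Bd; apply: (derived_mono _ d) => G [AG GY]; split => // y yG.
exact: tail_sub (GY y yG).
Qed.

Lemma bad_empty A k e b : ~ A fset0 -> BAD A k e b.
Proof. by move=> nA d; apply: nA; exact: (derived_in d).1. Qed.

Lemma tfam_inv_zero a E : tfam lt An a E -> is_zero lt a -> E = fset0.
Proof.
case=> [a' z|b' a' s'|b' a' n E' s' tE'|a' l|a' E' b' m la nE mE mmin inb tE'] z' //.
- by case: (z' b' (succ_lt s')).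
- by case: la => /(_ z').
Qed.

Lemma D_succ b a : succ_of lt b a -> Dprop b -> Dprop a.
Proof.
move=> s Db A hA k e se.
have [A0|nA0] := pselect (A fset0); last first.
  by exists e; split => //; [exact: subr_refl|right; exact: bad_empty].
pose Ax x := fun G => A (x |` G).
have hAx : forall x, hereditary (Ax x) by move=> x E F AE FE; apply: hA AE _; exact: fsetUS.
pose Phi j e := GOOD (Ax (e j)) j.+1 e b \/ BAD (Ax (e j)) j.+1 e b.
have [einf [sei subi prei Phii]] : exists e', [/\ sinc e', subr e e',
   (forall i, (i < k)%N -> e' i = e i) & forall j, (k <= j)%N -> Phi j e'].
  apply: diag => //.
  - move=> j e1 e2 s1 s2 sub12 pre12; rewrite /Phi (pre12 j (leqnn j)).
    by case=> [G|B]; [left; exact: good_pers G|right; exact: bad_pers B].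
  - move=> j e1 s1; have [e2 [s2 sub12 pre12 HG]] := Db (Ax (e1 j)) (hAx _) j.+1 e1 s1.
    exists e2; split => //; first by move=> i ij; apply: pre12; exact: ltnW ij.
    by rewrite /Phi (pre12 j (ltnSn j)).
have [ub|nub] := pselect (forall n, exists m, ((k <= m)%N /\ GOOD (Ax (einf m)) m.+1 einf b) /\ (n <= m)%N).
  have [sg [ssg [presg Hsg]]] := @sinc_in (fun m => (k <= m)%N /\ GOOD (Ax (einf m)) m.+1 einf b) k ub.
  exists (fun i => einf (sg i)); split.
  - by move=> i j ij; apply: sei; apply: ssg.
  - apply: subr_trans subi _ => i; by exists (sg i).
  - by move=> i ik; rewrite presg // prei.
  left => E tE Ek.
  have [->|nE] := eqVneq E fset0; first by rewrite imfset0.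
  have [m [mE mmin]] := fset_min nE.
  have tE' := tfam_min tE s mE mmin.
  have [[_ Gm] _] := Hsg m (Ek m mE).
  have -> : [fset einf (sg i) | i in E] = einf (sg m) |` einf @` (sg @` (E `\ m)).
    by rewrite -imfset_comp -imfsetU1 fsetD1K.
  apply: Gm.
  - apply: tfam_spread tE' _ _; [by move=> x y _ _; apply: ssg | by move=> x _; apply: sinc_ge].
  - move=> y /imfsetP [x /= xE ->]; apply: ssg.
    move: xE; rewrite in_fsetD1 => /andP [xm xE].
    by rewrite ltn_neqAle eq_sym xm mmin.
have [n0 Hn0] : exists n0, forall m, (k <= m)%N -> (n0 <= m)%N -> ~ GOOD (Ax (einf m)) m.+1 einf b.
  apply: contrapT => H; apply: nub => n; apply: contrapT => H2; apply: H; exists n => m km nm G.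
  by apply: H2; exists m.
exists einf; split => //; right => d.
have [N [iN HN]] := derived_succ_inv d s.
have [n [Nn nj]] := infinite_nat_ub iN (einf (maxn n0 k)).
have dn := HN n Nn.
have [_ Yn] := derived_in dn.
have [i ki ein] := Yn n (fset1U1 _ _).
have ij : (maxn n0 k <= i)%N by rewrite -(sinc_leE _ _ sei) ein.
have Bi : BAD (Ax (einf i)) i.+1 einf b.
  case: (Phii i ki) => // G; case: (Hn0 i ki _ G) => //.
  exact: leq_trans (leq_maxl _ _) ij.
apply: Bi.
have dt := derived_trans dn.
have dc := @derived_cofin _ _ _ n.+1 dt (fun y => ltac:(by rewrite inE)).
apply: (derived_mono _ dc) => G [[AG GY] Gn]; split; first by rewrite /Ax ein.
move=> y yG; have [l kl ely] := GY y (fset1Ur _ yG).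
exists l => //; rewrite -(sinc_ltE _ _ sei) ein ely; exact: Gn y yG.
Qed.

Lemma D_limit a : is_limit lt a -> (forall b, lt b a -> Dprop b) -> Dprop a.
Proof.
move=> l Db A hA k e se.
have [A0|nA0] := pselect (A fset0); last first.
  by exists e; split => //; [exact: subr_refl|right; exact: bad_empty].
have Lst : forall (L : seq O), (forall b, List.In b L -> lt b a) -> forall j e1, sinc e1 ->
   exists e2, [/\ sinc e2, subr e1 e2, (forall i, (i < j)%N -> e2 i = e1 i) &
    (forall b, List.In b L -> GOOD A j e2 b) \/ (exists b, List.In b L /\ BAD A j e2 b)].
  elim=> [|b L IH] HL j e1 s1.
    by exists e1; split => //; [exact: subr_refl|left => b []].
  have [e2 [s2 sub12 pre12 O2]] := Db b (HL b (or_introl erefl)) A hA j e1 s1.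
  have [e3 [s3 sub23 pre23 O3]] := IH (fun c cL => HL c (or_intror cL)) j e2 s2.
  exists e3; split => //.
  - exact: subr_trans sub12 sub23.
  - by move=> i ij; rewrite pre23 // pre12.
  - case: O2 => [G2|B2]; last by right; exists b; split; [left|exact: bad_pers B2].
    case: O3 => [G3|[c [cL B3]]]; last by right; exists c; split; [right|].
    by left => c [<-|cL]; [exact: good_pers G2|exact: G3].
pose Phi j e := (forall b, List.In b (An j a) -> GOOD A j e b) \/
                (exists b, List.In b (An j a) /\ BAD A j e b).
have [einf [sei subi prei Phii]] : exists e', [/\ sinc e', subr e e',
   (forall i, (i < k)%N -> e' i = e i) & forall j, (k <= j)%N -> Phi j e'].
  apply: diag => //.
  - move=> j e1 e2 s1 s2 sub12 _.
    case=> [G|[b [bin B]]]; [left => b bin; exact: good_pers (G b bin)|].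
    by right; exists b; split => //; exact: bad_pers B.
  - move=> j e1 s1; exact: Lst (fun b bin => (HAn l).1 j b bin) j e1 s1.
have [[j [kj [b [bin Bb]]]]|nB] := pselect (exists j, (k <= j)%N /\
    exists b, List.In b (An j a) /\ BAD A j einf b).
  exists einf; split => //; right => d.
  have db := derived_decr d ((HAn l).1 j b bin).
  apply: Bb.
  have dc := @derived_cofin _ _ _ (einf j) db (fun y => ltac:(by rewrite inE)).
  apply: (derived_mono _ dc) => G [[AG GY] GK]; split => // y yG.
  have [i ki eiy] := GY y yG; exists i => //.
  by rewrite -(sinc_leE _ _ sei) eiy; exact: GK _ yG.
exists einf; split => //; left => E tE Ek.
case: (tfam_inv_limit tE l) => [->|[bb [m [mE [mmin [inb tbb]]]]]]; first by rewrite imfset0.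
have km := Ek m mE.
case: (Phii m km) => [G|[c [cin Bc]]]; last by case: nB; exists m; split => //; exists c.
exact: G bb inb E tbb mmin.
Qed.

Lemma D_all a : Dprop a.
Proof.
elim/(well_founded_ind (o1_wf HO)): a => a IH.
have [z|[[b s]|la]] := classify a.
- move=> A hA k e se.
  have [A0|nA0] := pselect (A fset0); last first.
    by exists e; split => //; [exact: subr_refl|right; exact: bad_empty].
  exists e; split => //; first exact: subr_refl.
  by left => E tE _; rewrite (tfam_inv_zero tE z) imfset0.
- exact: D_succ s (IH b (succ_lt s)).
- exact: D_limit la IH.
Qed.

End Ord.

Theorem corollary5p6 (O : Type) (lt : O -> O -> Prop) (HO : is_omega1 lt)
  (An : nat -> O -> list O) (HAn : is_tf_data lt An)
  (A : nfamily) (Hher : hereditary A) (Hcpt : fam_compact A)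
  (P : set nat) (HP : infinite_set P) (a : O) :
  large lt An A a P <->
  (forall Q : set nat, (Q `<=` P)%classic -> infinite_set Q ->
     CB_ge_succ lt (restrict A Q) a).
Proof.
have herQ : forall Q, hereditary (restrict A Q).
  move=> Q E F [AE EQ] FE; split; first exact: Hher AE FE.
  by move=> n nF; apply: EQ; exact: (fsubsetP FE) n nF.
split.
- move=> L Q QP iQ.
  have [N [NQ [iN sp]]] := L Q QP iQ.
  have [e0 [se0 He0]] := enum_inf iN.
  have d : derived lt (restrict A Q) a fset0.
    apply: (lower_bound HO HAn se0 (herQ Q)) => E tE; rewrite fset0U; split.
      by apply: sp; exists e0; split => //; split => //; exists E.
    by move=> n /imfsetP [i _ ->]; apply: NQ; apply/He0; exists i.
  have [g [ng gmin]] := CB_exists HO Hcpt (fun E (h : restrict A Q E) => h.1).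
  exists g; split => //; have [ag|[ag|ga]] := o1_total HO a g => //.
    by subst g; case: (ng _ d).
  by case: (ng fset0 (derived_decr HO d ga)).
- move=> HQ M MP iM.
  have [e [se He]] := enum_inf iM.
  have [e' [se' sub _ GB]] := D_all HO HAn a Hher 0 se.
  have rM : (range e' `<=` M)%classic.
    by move=> _ [i _ <-]; have [j ej] := sub i; rewrite -ej; apply/He; exists j.
  case: GB => [G|B].
    exists (range e'); split; [exact: rM|split; first exact: sinc_range_inf].
    move=> E' [e0 [se0 [He0 [E [tE ->]]]]].
    have sub0 : subr e' e0.
      by move=> i; have [j _ ej] := (He0 (e0 i)).2 (ex_intro _ i erefl); exists j.
    exact: (good_pers HAn se' se0 sub0 G tE (fun i _ => leq0n i)).
  exfalso.
  have [g [[ng gmin] ag]] := HQ (range e') (subset_trans rM MP) (sinc_range_inf se').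
  have [E dE] := gmin a ag.
  apply: B; have d0 := derived_her HO (herQ _) dE (fsub0set E).
  apply: (derived_mono HO _ d0) => G [AG GY]; split => // y yG.
  by have [i _ <-] := GY y yG; exists i.
Qed.
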